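(* Let $x\in\mathcal A^{\mathbb N}$ and let $\mathcal L=\mathcal L_x$ be the set of finite nonempty subwords of $x$. Let $w\in\mathcal L_n$ have minimal valid step $q$, and let $z=pw^{q\ast r}s$ and $z'=p'w^{q\ast r'}s'$ be exit words of $w$ with step $q$. If $z$ begins at position $i$ of $x$ and $z'$ begins at position $i'>i$ of $x$, then $i'\ge i+|z|-n$. Moreover, $|x_{[i,i'+|z'|-1]}|_w\ge r+r'$.
   Context: $|y|_w$ denotes the number of positions $j$, $1\le j\le |y|-|w|+1$, with $y_{[j,j+|w|-1]}=w$. For $n\ge 2$, $w\in\mathcal A^n$ and integer $1\le q\le n/2$ with $w_{[q+1,n]}=w_{[1,n-q]}$, $w^{q\ast r}$ is the word of length $n+(r-1)q$ with $(w^{q\ast r})_{[q(i-1)+1,q(i-1)+n]}=w$ for $1\le i\le r$; $q$ is valid for $w$ in $\mathcal L$ if moreover $w^{q\ast2}\in\mathcal L$; the minimal valid step is the least one. An exit word for $w$ with step $q$ is a word $z=pw^{q\ast r}s$, $r\ge1$, $1\le|p|,|s|\le q$, such that $z\in\mathcal L$; $pw^{q\ast r}$ is not a suffix of $w^{q\ast(r+1)}$ but $p_{[2,|p|]}w^{q\ast r}$ is; and $w^{q\ast r}s$ is not a prefix of $w^{q\ast(r+1)}$ but $w^{q\ast r}s_{[1,|s|-1]}$ is (with $p_{[2,1]}$, $s_{[1,0]}$ empty). *)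

(* Defs.v *)
From mathcomp Require Import all_boot.
Set Implicit Arguments. Unset Strict Implicit. Unset Printing Implicit Defensive.

Section Words.
Variable A : eqType.

(* The infinite word x is a function nat -> A; positions are 0-based. *)
(* factor x i m = x_{[i, i+m-1]} : the length-m block of x starting at i. *)
Definition factor (x : nat -> A) (i m : nat) : seq A := mkseq (fun j => x (i + j)) m.

Definition inL (x : nat -> A) (u : seq A) : Prop :=
  0 < size u /\ exists i, factor x i (size u) = u.

Definition occ (y w : seq A) : nat :=
  count (fun j => take (size w) (drop j y) == w) (iota 0 (size y - size w).+1).

(* w^{q*r} : for w with period q (w_{[q+1,n]} = w_{[1,n-q]}) and r >= 1, this is
   the word of length n+(r-1)q whose blocks at positions q(i-1)+1 .. q(i-1)+n equal w *)
Definition wpow (w : seq A) (q r : nat) : seq A :=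
  flatten (nseq r.-1 (take q w)) ++ w.

Definition valid_step (x : nat -> A) (w : seq A) (q : nat) : Prop :=
  [/\ 1 <= q, q.*2 <= size w, drop q w = take (size w - q) w & inL x (wpow w q 2)].

Definition min_valid_step (x : nat -> A) (w : seq A) (q : nat) : Prop :=
  valid_step x w q /\ forall q', valid_step x w q' -> q <= q'.

Definition exit_word (x : nat -> A) (w : seq A) (q : nat) (p : seq A) (r : nat) (s : seq A) : Prop :=
  [/\ 1 <= r,
      (1 <= size p <= q) && (1 <= size s <= q),
      inL x (p ++ wpow w q r ++ s),
      ~~ suffix (p ++ wpow w q r) (wpow w q r.+1) /\ suffix (behead p ++ wpow w q r) (wpow w q r.+1)
    & ~~ prefix (wpow w q r ++ s) (wpow w q r.+1) /\ prefix (wpow w q r ++ take (size s).-1 s) (wpow w q r.+1)].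

End Words.

(* Main.v *)
Require Import Defs.
From mathcomp Require Import all_boot zify.
Set Implicit Arguments. Unset Strict Implicit. Unset Printing Implicit Defensive.

Section H.
Variable A : eqType.
Variable d : A.
Implicit Types s u w : seq A.

Definition per q s := forall k, k + q < size s -> nth d s k = nth d s (k + q).

Lemma per_iter q s : per q s -> forall k m, m + k * q < size s -> nth d s m = nth d s (m + k * q).
Proof.
move=> P; elim=> [|k IH] m H; first by rewrite mul0n addn0.
rewrite IH; last by lia.
rewrite P; last by lia.
congr nth; lia.
Qed.

Lemma per_cons_block q s tq : per q s -> size tq = q -> take q s = tq -> per q (tq ++ s).
Proof.
move=> P St Tk k Hk; rewrite size_cat in Hk.
have Hs : q <= size s by rewrite -St -Tk size_take; case: ltnP => //; lia.
rewrite !nth_cat St.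
case: (ltnP k q) => Hkq.
  have -> : (k + q < q) = false by lia.
  rewrite -Tk nth_take // addnK; done.
have -> : (k + q < q) = false by lia.
rewrite addnK P; last by lia.
congr nth; lia.
Qed.

Lemma per_w q w : q <= size w -> drop q w = take (size w - q) w -> per q w.
Proof.
move=> Hq E k Hk.
have : nth d (drop q w) k = nth d (take (size w - q) w) k by rewrite E.
rewrite nth_drop nth_take; last by lia.
by rewrite addnC => ->.
Qed.

Lemma size_flat_nseq m (t : seq A) : size (flatten (nseq m t)) = m * size t.
Proof. by elim: m => [|m IH] //=; rewrite size_cat IH mulSn. Qed.

Lemma size_wpow w q r : q <= size w -> size (wpow w q r) = r.-1 * q + size w.
Proof.
move=> H; rewrite /wpow size_cat size_flat_nseq size_take.
case: ltnP => H'; first by [].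
have -> : q = size w by lia. done.
Qed.

Lemma wpow_per w q r : 1 <= q -> q <= size w -> drop q w = take (size w - q) w -> per q (wpow w q r).
Proof.
move=> H1 H2 E; rewrite /wpow.
have St : size (take q w) = q by rewrite size_take; case: ltnP => //; lia.
suff : forall m, per q (flatten (nseq m (take q w)) ++ w) /\
   take q (flatten (nseq m (take q w)) ++ w) = take q w by move/(_ r.-1) => [].
elim=> [|m [IH1 IH2]] /=; first by split => //; apply: per_w.
rewrite -catA; split; first by apply: per_cons_block.
by rewrite take_cat St ltnn subnn take0 cats0.
Qed.

Lemma per_suffix q (t : seq A) u : per q (t ++ u) -> per q u.
Proof.
move=> P k Hk; have := P (size t + k); rewrite size_cat !nth_cat.
have -> : (size t + k < size t) = false by lia.
have -> : (size t + k + q < size t) = false by lia.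
rewrite addKn -addnA addKn; apply; lia.
Qed.

Lemma per_prefix q (t : seq A) u : per q (u ++ t) -> per q u.
Proof.
move=> P k Hk; have := P k; rewrite size_cat !nth_cat.
have -> : (k < size u) by lia.
have -> : (k + q < size u) by lia.
apply; lia.
Qed.

Lemma per_join q a W b : per q (a ++ W) -> per q (W ++ b) -> q <= size W -> per q (a ++ W ++ b).
Proof.
move=> Pa Pb Hq k Hk; rewrite size_cat size_cat in Hk.
case: (ltnP (k + q) (size a + size W)) => H.
  rewrite catA !(nth_cat _ (a ++ W)) size_cat H.
  have -> : k < size a + size W by lia.
  apply: Pa; rewrite size_cat; lia.
rewrite !(nth_cat _ a).
have -> : (k < size a) = false by lia.
have -> : (k + q < size a) = false by lia.
have -> : k + q - size a = (k - size a) + q by lia.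
apply: Pb; rewrite size_cat; lia.
Qed.

Lemma break q p W V : 1 <= size p <= q -> q <= size W -> per q V -> size V = size W + q ->
  suffix (behead p ++ W) V -> ~~ suffix (p ++ W) V ->
  nth d (p ++ W) 0 != nth d (p ++ W) q.
Proof.
move=> /andP[H1p Hp] HW P SV /suffixP[t Et] NS.
case: p H1p Hp Et NS => [|p0 bp] // _ Hp Et NS /=.
rewrite Et size_cat size_cat /= in SV.
case/lastP: t Et SV => [|t' c] Et SV.
  by move: Hp SV => /= Hp SV; lia.
move: Hp => /= Hp.
rewrite size_rcons in SV.
apply/negP => /eqP E0.
have Hc : p0 = c.
  rewrite E0.
  have HP := P (size t'); rewrite Et size_cat size_rcons size_cat /= in HP.
  have HP' := HP ltac:(lia).
  move: HP'; rewrite -cats1 -catA /= nth_cat ltnn subnn /= => ->.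
  rewrite nth_cat.
  have -> : (size t' + q < size t') = false by lia.
  have -> : size t' + q - size t' = q.-1.+1 by lia.
  have -> : q = q.-1.+1 by lia.
  by [].
move: NS; rewrite Et Hc -cats1 -catA /=.
by rewrite suffix_suffix.
Qed.


Lemma wpow_nth w q r k t : 1 <= q -> q <= size w -> drop q w = take (size w - q) w ->
  k < r -> t < size w -> nth d (wpow w q r) (k * q + t) = nth d w t.
Proof.
move=> H1 H2 E Hk Ht.
have P := @wpow_per w q r H1 H2 E.
have Sz := @size_wpow w q r H2.
have Hkq : k * q <= r.-1 * q by rewrite leq_mul2r; apply/orP; right; lia.
rewrite (@per_iter q _ P (r.-1 - k)); last by rewrite Sz; nia.
have -> : k * q + t + (r.-1 - k) * q = r.-1 * q + t.
  rewrite mulnBl; lia.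
rewrite /wpow nth_cat size_flat_nseq.
have Stq : size (take q w) = q by rewrite size_take; case: ltnP => //; lia.
rewrite Stq.
have -> : (r.-1 * q + t < r.-1 * q) = false by lia.
by rewrite addKn.
Qed.

Lemma factor_nth (x : nat -> A) i L k : k < L -> nth d (factor x i L) k = x (i + k).
Proof. by move=> H; rewrite /factor nth_mkseq. Qed.

Lemma occ_pos (x : nat -> A) i0 z w q p r s k t : 1 <= q -> q <= size w -> drop q w = take (size w - q) w ->
  z = p ++ wpow w q r ++ s -> factor x i0 (size z) = z -> k < r -> t < size w ->
  x (i0 + size p + k * q + t) = nth d w t.
Proof.
move=> H1 H2 E Ez Hf Hk Ht.
have Sz := @size_wpow w q r H2.
have Hkq : k * q <= r.-1 * q by rewrite leq_mul2r; apply/orP; right; lia.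
have Hlt : size p + k * q + t < size z by rewrite Ez [size (p ++ _)]size_cat [size (wpow _ _ _ ++ _)]size_cat Sz; lia.
have -> : i0 + size p + k * q + t = i0 + (size p + k * q + t) by lia.
rewrite -(factor_nth x i0 Hlt) Hf {1}Ez nth_cat -addnA.
have -> : (size p + (k * q + t) < size p) = false by lia.
rewrite addKn nth_cat Sz.
have -> : k * q + t < r.-1 * q + size w by lia.
exact: wpow_nth.
Qed.

Lemma take_drop_eq (y w : seq A) j : j + size w <= size y ->
  (forall t, t < size w -> nth d y (j + t) = nth d w t) -> take (size w) (drop j y) = w.
Proof.
move=> H E; apply: (@eq_from_nth _ d).
  rewrite size_take size_drop; case: ifP => Hc; lia.
move=> t; rewrite size_take size_drop => Ht.
have Ht' : t < size w by move: Ht; case: ifP => Hc Ht; lia.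
by rewrite nth_take // nth_drop E.
Qed.

Lemma occ_ge (y w : seq A) (js : seq nat) : uniq js ->
  (forall j, j \in js -> j + size w <= size y /\ take (size w) (drop j y) = w) ->
  size js <= occ y w.
Proof.
move=> U H; rewrite /occ -size_filter; apply: uniq_leq_size => // j /H [H1 H2].
rewrite mem_filter H2 eqxx mem_iota /=; lia.
Qed.

End H.

Unset Implicit Arguments.
Theorem mainTheorem15 (A : eqType) (x : nat -> A) (w : seq A) (q : nat)
  (p : seq A) (r : nat) (s : seq A) (p' : seq A) (r' : nat) (s' : seq A) (i i' : nat) :
  2 <= size w -> inL x w ->
  min_valid_step x w q ->
  exit_word x w q p r s -> exit_word x w q p' r' s' ->
  factor x i (size (p ++ wpow w q r ++ s)) = p ++ wpow w q r ++ s ->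
  factor x i' (size (p' ++ wpow w q r' ++ s')) = p' ++ wpow w q r' ++ s' ->
  i < i' ->
  i + size (p ++ wpow w q r ++ s) - size w <= i' /\
  r + r' <= occ (factor x i (i' + size (p' ++ wpow w q r' ++ s') - i)) w.
Proof.
move=> Hn _ [[Hq1 Hq2 E _] _] [Hr /andP[/andP[Hp1 Hp2] /andP[Hs1 Hs2]] _ [NS S] [NP Pf]]
  [Hr' /andP[/andP[Hp1' Hp2'] /andP[Hs1' Hs2']] _ [NS' S'] [NP' Pf']] Hz Hz' Hii.
set d := x 0.
have Hqn : q <= size w by lia.
set W := wpow w q r. set W' := wpow w q r'.
have SW : size W = r.-1 * q + size w by apply: size_wpow.
have SW' : size W' = r'.-1 * q + size w by apply: size_wpow.
have PV := @wpow_per A d w q r.+1 Hq1 Hqn E.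
have PV' := @wpow_per A d w q r'.+1 Hq1 Hqn E.
have Hrq : r.-1 * q + q = r * q by case: (r) Hr => //= r0 _; rewrite mulSn addnC.
have Hrq' : r'.-1 * q + q = r' * q by case: (r') Hr' => //= r0 _; rewrite mulSn addnC.
have SV : size (wpow w q r.+1) = size W + q by rewrite size_wpow // SW /=; lia.
have SV' : size (wpow w q r'.+1) = size W' + q by rewrite size_wpow // SW' /=; lia.
have Hq1W' : q <= size W' by rewrite SW'; lia.
have Hq1W : q <= size W by rewrite SW; lia.
have Hpp' : 1 <= size p' <= q by rewrite Hp1' Hp2'.
have Br := break Hpp' Hq1W' PV' SV' S' NS'.
set u := behead p ++ W ++ take (size s).-1 s.
have Pu : per d q u.
  apply: per_join => //.
    by case/suffixP: S => t Et; rewrite Et in PV; apply: (per_suffix PV).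
  by case/prefixP: Pf => t Et; rewrite Et in PV; apply: (per_prefix PV).
have Su : size u = size (p ++ W ++ s) - 2.
  rewrite /u size_cat [size (W ++ _)]size_cat size_cat [size (W ++ _)]size_cat size_behead size_take.
  move: Hp1 Hs1; clear; case: ifP => Hc; lia.
have Ez : p ++ W ++ s = head d p :: (u ++ drop (size s).-1 s).
  by rewrite /u; case: (p) Hp1 => //= a b _; rewrite -!catA cat_take_drop.
have Hq2' : q + q <= size w by rewrite addnn.
clear Hq2 Hrq Hrq' SV SV' PV PV' NS S NP Pf NS' S' NP' Pf' Hpp' Pf.
have Part1 : i + size (p ++ W ++ s) <= i' + q + 1.
  rewrite leqNgt; apply/negP => Hc.
  have Hk : i' - i + q < size (p ++ W ++ s) by lia.
  have X1 : x i' = nth d (p' ++ W') 0.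
    have H0 : 0 < size (p' ++ W' ++ s') by rewrite !size_cat; lia.
    rewrite -[i']addn0 -(factor_nth d x i' H0) Hz' catA nth_cat size_cat; case: ifP => //; lia.
  have X2 : x (i' + q) = nth d (p' ++ W') q.
    have H0 : q < size (p' ++ W' ++ s') by rewrite !size_cat; lia.
    rewrite -(factor_nth d x i' H0) Hz' catA nth_cat size_cat -/W' SW' ifT //; lia.
  have Y1 : x i' = nth d u (i' - i).-1.
    have H0 : i' - i < size (p ++ W ++ s) by lia.
    have Ei : i' = i + (i' - i) by lia.
    rewrite {1}Ei -(factor_nth d x i H0) Hz Ez.
    have -> : i' - i = (i' - i).-1.+1 by lia.
    rewrite /= nth_cat ifT //; lia.
  have Y2 : x (i' + q) = nth d u ((i' - i).-1 + q).
    have -> : i' + q = i + (i' - i + q) by lia.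
    rewrite -(factor_nth d x i Hk) Hz Ez.
    have -> : i' - i + q = ((i' - i).-1 + q).+1 by lia.
    rewrite /= nth_cat ifT //; lia.
  have Eq : nth d u (i' - i).-1 = nth d u ((i' - i).-1 + q) by apply: Pu; lia.
  by rewrite -X1 -X2 Y1 Y2 Eq eqxx in Br.
split; first by lia.
set L := i' + size (p' ++ W' ++ s') - i.
set js := map (fun k => size p + k * q) (iota 0 r) ++ map (fun k => i' - i + size p' + k * q) (iota 0 r').
have -> : r + r' = size js by rewrite size_cat !size_map !size_iota.
have Szz : size (p ++ W ++ s) = size p + r.-1 * q + size w + size s by rewrite size_cat [size (W ++ _)]size_cat SW; lia.
have Szz' : size (p' ++ W' ++ s') = size p' + r'.-1 * q + size w + size s' by rewrite size_cat [size (W' ++ _)]size_cat SW'; lia.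
apply: occ_ge.
  rewrite cat_uniq; apply/and3P; split.
  - rewrite map_inj_uniq ?iota_uniq // => a b /eqP; rewrite eqn_add2l eqn_pmul2r //; move/eqP; done.
  - apply/hasPn => y /mapP [k2 Hk2 ->]; apply/mapP => [[k1 Hk1 E1]].
    rewrite mem_iota in Hk1; rewrite mem_iota in Hk2.
    have : k1 * q <= r.-1 * q by rewrite leq_mul2r; apply/orP; right; lia.
    lia.
  - rewrite map_inj_uniq ?iota_uniq // => a b /eqP; rewrite eqn_add2l eqn_pmul2r //; move/eqP; done.
move=> j; rewrite mem_cat => /orP [] /mapP [k Hk ->]; rewrite mem_iota in Hk.
- have Hkq : k * q <= r.-1 * q by rewrite leq_mul2r; apply/orP; right; lia.
  have Hr1 : size p + k * q + size w <= size (factor x i L) by rewrite size_mkseq; lia.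
  split => //; apply: take_drop_eq => // t Ht.
  rewrite factor_nth; last by lia.
  have -> : i + (size p + k * q + t) = i + size p + k * q + t by lia.
  exact: (occ_pos d Hq1 Hqn E (erefl _) Hz).
- have Hkq : k * q <= r'.-1 * q by rewrite leq_mul2r; apply/orP; right; lia.
  have Hr1 : i' - i + size p' + k * q + size w <= size (factor x i L) by rewrite size_mkseq; lia.
  split => //; apply: take_drop_eq => // t Ht.
  rewrite factor_nth; last by lia.
  have -> : i + (i' - i + size p' + k * q + t) = i' + size p' + k * q + t by lia.
  exact: (occ_pos d Hq1 Hqn E (erefl _) Hz').
Qed.
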